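(* Let $E/F$ be a quadratic extension of fields of characteristic $0$ and $\beta\in\mathrm{GL}_n(E)$ skew-Hermitian. Suppose $A'\in\mathfrak h_n^\beta(F)$ is regular semisimple and $A'=\bar a a$ for some $a\in\mathrm{GL}_n(E)$. Then $A'=\beta^{-1}\zeta^*\beta\zeta$ for some $\zeta\in\mathrm{GL}_n(E)$.
   Context: $x\mapsto\bar x$ is the nontrivial automorphism of $E/F$ (entrywise on matrices), $g^*={}^t\bar g$, $\beta^*=-\beta$. $\mathfrak h_n^\beta(F)$ is the set of $A'\in\mathrm{Mat}_n(E)$ with $A'^*=\beta A'\beta^{-1}$. *)

(* Defs.v *)
From HB Require Import structures.
From mathcomp Require Import all_boot all_order all_algebra.
Set Implicit Arguments. Unset Strict Implicit. Unset Printing Implicit Defensive.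
Import Order.TTheory GRing.Theory Num.Theory.
Local Open Scope ring_scope.

(* The quadratic extension E/F is encoded by a field E together with a
   nontrivial involutive field automorphism [sigma] (x |-> xbar); F is its
   fixed field. *)
Definition is_nontrivial_involution (E : fieldType) (sigma : {rmorphism E -> E}) :=
  (forall x, sigma (sigma x) = x) /\ (exists x, sigma x != x).

Definition in_base (E : fieldType) (sigma : {rmorphism E -> E}) (x : E) :=
  sigma x = x.

Definition mxconj (E : fieldType) (sigma : {rmorphism E -> E}) n (g : 'M[E]_n) :=
  map_mx sigma g.
Definition mxstar (E : fieldType) (sigma : {rmorphism E -> E}) n (g : 'M[E]_n) :=
  (map_mx sigma g)^T.

Definition in_h (E : fieldType) (sigma : {rmorphism E -> E}) n (beta A : 'M[E]_n) :=
  mxstar sigma A = beta *m A *m invmx beta.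

(* regular semisimple: the characteristic polynomial has distinct roots in an
   algebraic closure, i.e. it is separable (coprime to its derivative). *)
Definition regular_semisimple (E : fieldType) n (A : 'M[E]_n) :=
  coprimep (char_poly A) (char_poly A)^`().

(* Main.v *)
Require Import Defs.
From HB Require Import structures.
From mathcomp Require Import all_boot all_order all_algebra zify.
From Stdlib Require Import Classical.
Set Implicit Arguments. Unset Strict Implicit. Unset Printing Implicit Defensive.
Import Order.TTheory GRing.Theory Num.Theory.
Local Open Scope ring_scope.
Lemma sqf_sq (F : fieldType) (P e : {poly F}) :
  coprimep P P^`() -> e * e %| P -> e %= 1.
Proof.
move=> cP /dvdpP [r Pe]; rewrite Pe in cP.
move/coprimepP: cP; apply.
  by rewrite mulrA dvdp_mulIr.
rewrite !derivM; apply: dvdp_add.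
  by rewrite mulrA dvdp_mulIr.
apply: dvdp_mull; apply: dvdp_add.
  exact: dvdp_mulIr.
exact: dvdp_mulIl.
Qed.

Lemma sqf_dvd_pow (F : fieldType) (P q : {poly F}) k :
  coprimep P P^`() -> P %| q ^+ k -> P %| q.
Proof.
move=> cP Pq.
have P0 : P != 0.
  apply: contraTneq cP => ->; by rewrite deriv0 coprime0p eqp01.
set g := gcdp P q; set h := P %/ g.
have gP : g %| P by exact: dvdp_gcdl.
have Phg : h * g = P by rewrite /h divpK.
have chq : coprimep h q.
  apply/coprimepP => d dh dq.
  apply: (sqf_sq cP); rewrite -Phg; apply: dvdp_mul => //.
  rewrite dvdp_gcd dq andbT.
  by apply: dvdp_trans dh _; rewrite -Phg dvdp_mulIl.
have h1 : h %= 1.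
  move/coprimepP: (coprimep_expr k chq); apply => //.
  by apply: dvdp_trans Pq; rewrite -Phg dvdp_mulIl.
rewrite -Phg -[q]mul1r; apply: dvdp_mul.
  by case/andP: h1.
exact: dvdp_gcdr.
Qed.

Lemma char_dvd_pow (F : fieldType) m (A : 'M[F]_m.+1) (p : {poly F}) :
  horner_mx A p = 0 -> char_poly A %| p ^+ m.+1.
Proof.
move=> pA.
have [phi [[phiV phiK Kphi] phiZ phiC _]] := mx_poly_ring_isom F m.
have : root (map_poly (@scalar_mx F m.+1) p) A by apply/rootP.
case/factor_theorem => q Hq.
have E : p%:M = phiV q * char_poly_mx A.
  apply: (can_inj phiK); rewrite rmorphM /= Kphi phiZ Hq.
  by rewrite /char_poly_mx rmorphB /= phiZ phiC map_polyX.
apply/dvdpP; exists (\det (phiV q)).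
by rewrite -det_scalar E -mulmxE det_mulmx.
Qed.
Lemma ex_min_nat (P : nat -> Prop) k : P k ->
  exists j, P j /\ forall i, P i -> (j <= i)%N.
Proof.
move: k; elim/ltn_ind => k IH Pk.
case: (classic (exists i, P i /\ (i < k)%N)) => [[i [Pi ik]]|H].
  exact: IH Pi.
exists k; split => // i Pi; rewrite leqNgt; apply/negP => ik.
by apply: H; exists i.
Qed.

Lemma ex_max_nat (P : nat -> Prop) k B : P k -> (forall i, P i -> (i <= B)%N) ->
  exists j, P j /\ forall i, P i -> (i <= j)%N.
Proof.
move=> Pk HB.
have [j [Pj Hj]] := @ex_min_nat (fun j => P (B - j)%N) (B - k)%N
  (ltac:(by rewrite /= subKn ?HB)).
exists (B - j)%N; split => // i Pi.
have := Hj (B - i)%N; rewrite subKn ?HB // => /(_ Pi) => H.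
have := HB i Pi; lia.
Qed.

Definition kills (F : fieldType) m (A : 'M[F]_m.+1) (v : 'cV[F]_m.+1)
  (p : {poly F}) := horner_mx A p *m v = 0.
Definition is_ann (F : fieldType) m (A : 'M[F]_m.+1) (v : 'cV[F]_m.+1)
  (p : {poly F}) := kills A v p /\ forall r, kills A v r -> p %| r.

Lemma killsM (F : fieldType) m (A : 'M[F]_m.+1) v p q :
  kills A v q -> kills A v (p * q).
Proof. by rewrite /kills rmorphM /= -mulmxE -mulmxA => ->; rewrite mulmx0. Qed.

Lemma kills_dvd (F : fieldType) m (A : 'M[F]_m.+1) v p q :
  kills A v q -> q %| p -> kills A v p.
Proof. by move=> kq /dvdpP [r ->]; apply: killsM. Qed.

Lemma kills_char (F : fieldType) m (A : 'M[F]_m.+1) v : kills A v (char_poly A).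
Proof. by rewrite /kills Cayley_Hamilton mul0mx. Qed.

Lemma ann_exists (F : fieldType) m (A : 'M[F]_m.+1) v : exists p, is_ann A v p.
Proof.
have [k [[r [r0 [kr sr]]] Hmin]] := @ex_min_nat
  (fun k => exists r, r != 0 /\ kills A v r /\ size r = k) _
  (ex_intro _ (char_poly A) (conj (monic_neq0 (char_poly_monic A))
     (conj (kills_char A v) erefl))).
exists r; split => // s ks.
have km : kills A v (s %% r).
  have k2 : kills A v (s %/ r * r) by apply: killsM.
  move: ks; rewrite /kills {1}(divp_eq s r) rmorphD /= mulmxDl.
  by rewrite k2 add0r.
apply/modp_eq0P; apply/eqP; apply/negPn/negP => m0.
have := ltn_modp s r; rewrite r0 sr ltnNge => /negP; apply.
by apply: Hmin; exists (s %% r).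
Qed.

Lemma ann_neq0 (F : fieldType) m (A : 'M[F]_m.+1) v p : is_ann A v p -> p != 0.
Proof.
case=> _ H; apply: contraTneq (H _ (kills_char A v)) => ->.
by rewrite dvd0p monic_neq0 // char_poly_monic.
Qed.

Lemma ann_dvd_char (F : fieldType) m (A : 'M[F]_m.+1) v p : is_ann A v p ->
  p %| char_poly A.
Proof. by case=> _ H; apply: H; apply: kills_char. Qed.

Lemma ann_div (F : fieldType) m (A : 'M[F]_m.+1) w q g :
  is_ann A w q -> g %| q -> is_ann A (horner_mx A g *m w) (q %/ g).
Proof.
move=> aq gq; have q0 := ann_neq0 aq.
have g0 : g != 0 by apply: contraNneq q0 => g0; move: gq; rewrite g0 dvd0p.
case: aq => kq Hq; split.
  by rewrite /kills mulmxA mulmxE -rmorphM /= divpK.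
move=> r; rewrite /kills mulmxA mulmxE -rmorphM /= => /Hq.
by rewrite -{1}(divpK gq) dvdp_mul2r.
Qed.

Lemma ann_add (F : fieldType) m (A : 'M[F]_m.+1) v w p q :
  is_ann A v p -> is_ann A w q -> coprimep p q -> is_ann A (v + w) (p * q).
Proof.
move=> [kp Hp] [kq Hq] cpq; split.
  have k1 : kills A v (q * p) by apply: killsM.
  have k2 : kills A w (p * q) by apply: killsM.
  move: k1 k2; rewrite /kills mulmxDr [q * p]mulrC => -> ->; by rewrite addr0.
move=> r kr; rewrite Gauss_dvdp //; apply/andP; split.
  rewrite -(Gauss_dvdpl r cpq); apply: Hp.
  have k2 : kills A w (r * q) by apply: killsM.
  have := killsM q kr; rewrite /kills mulmxDr mulrC.
  by rewrite k2 addr0.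
have cqp : coprimep q p by rewrite coprimep_sym.
rewrite -(Gauss_dvdpl r cqp); apply: Hq.
have k2 : kills A v (r * p) by apply: killsM.
have := killsM p kr; rewrite /kills mulmxDr mulrC.
by rewrite k2 add0r.
Qed.

Lemma mx0_of_kill (F : fieldType) m n (X : 'M[F]_(m, n)) :
  (forall w : 'cV_n, X *m w = 0) -> X = 0.
Proof.
move=> H; apply/matrixP => i j; have := H (delta_mx j 0).
by rewrite -colE => /matrixP /(_ i 0); rewrite !mxE.
Qed.

Lemma cyclic_ann (F : fieldType) m (A : 'M[F]_m.+1) :
  coprimep (char_poly A) (char_poly A)^`() ->
  exists v p, is_ann A v p /\ size p = m.+2.
Proof.
move=> cP.
have chi0 : char_poly A != 0 by rewrite monic_neq0 // char_poly_monic.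
have bnd : forall v p, is_ann A v p -> (size p <= m.+2)%N.
  move=> v p ap; rewrite -(size_char_poly A); apply: dvdp_leq chi0 _.
  exact: ann_dvd_char ap.
have [p0 ap0] := ann_exists A 0.
have [k [[v [p [ap sp]]] Hmax]] := @ex_max_nat
  (fun k => exists v p, is_ann A v p /\ size p = k) (size p0) m.+2
  (ex_intro _ 0 (ex_intro _ p0 (conj ap0 erefl)))
  (fun i H => match H with ex_intro v (ex_intro p (conj a s)) =>
     eq_ind _ (fun j => (j <= m.+2)%N) (bnd v p a) _ s end).
exists v, p; split => //.
have pA : horner_mx A p = 0.
  apply: mx0_of_kill => w.
  have [q aq] := ann_exists A w.
  set g := gcdp p q; set h := q %/ g.
  have gq : g %| q := dvdp_gcdr p q.
  have aw := ann_div aq gq.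
  have hg : h * g = q by rewrite /h divpK.
  have cph : coprimep p h.
    apply/coprimepP => d dp dh; apply: (sqf_sq cP).
    apply: (dvdp_trans _ (ann_dvd_char aq)); rewrite -hg; apply: dvdp_mul => //.
    by rewrite dvdp_gcd dp /=; apply: dvdp_trans dh _; rewrite -hg dvdp_mulIl.
  have aph := ann_add ap aw cph.
  have := Hmax _ (ex_intro _ _ (ex_intro _ _ (conj aph erefl))).
  rewrite size_mul ?(ann_neq0 ap) ?(ann_neq0 aw) // sp => H.
  have h0 := ann_neq0 aw.
  have sh : size h == 1%N.
    rewrite eqn_leq; apply/andP; split.
    by rewrite /h; move: H; move: (size (q %/ g)) => s; lia.
    by rewrite lt0n size_poly_eq0.
  move: sh; rewrite size_poly_eq1 => /andP [h1 _].
  have qp : q %| p by rewrite -hg -[p]mul1r; apply: dvdp_mul => //; apply: dvdp_gcdl.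
  exact: kills_dvd aq.1 qp.
have chip := sqf_dvd_pow cP (char_dvd_pow pA).
have pchi := ann_dvd_char ap.
by rewrite -(size_char_poly A); apply: eqp_size; rewrite /eqp chip pchi.
Qed.

Definition krylov (F : fieldType) m (A : 'M[F]_m.+1) (v : 'cV[F]_m.+1) : 'M_m.+1 :=
  \matrix_(i, j) (A ^+ j *m v) i 0.

Lemma krylov_mul (F : fieldType) m (A : 'M[F]_m.+1) (v x : 'cV[F]_m.+1) :
  krylov A v *m x = horner_mx A (\poly_(j < m.+1) x (inord j) 0) *m v.
Proof.
rewrite poly_def linear_sum /= mulmx_suml; apply/matrixP => i k.
rewrite (ord1 k) !mxE summxE; apply: eq_bigr => j _.
rewrite linearZ /= rmorphXn /= horner_mx_X inord_val -scalemxAl !mxE mulrC.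
by [].
Qed.

Lemma krylov_unit (F : fieldType) m (A : 'M[F]_m.+1) v p :
  is_ann A v p -> size p = m.+2 -> krylov A v \in unitmx.
Proof.
move=> [kp Hp] sp; rewrite unitmxE unitfE -det_tr.
apply/negP => /det0P [u u0 uK]; apply/negP: u0; rewrite negbK.
have Kx : krylov A v *m u^T = 0 by rewrite -[krylov A v]trmxK -trmx_mul uK trmx0.
set r := \poly_(j < m.+1) u^T (inord j) 0.
have kr : kills A v r by rewrite /kills -krylov_mul.
have r0 : r = 0.
  apply/eqP; apply/negPn/negP => r0.
  have := dvdp_leq r0 (Hp _ kr); rewrite sp.
  by have := size_poly m.+1 (fun j => u^T (inord j) 0); rewrite -/r; lia.
apply/eqP/rowP => j; have := congr1 (fun q : {poly F} => q`_j) r0.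
by rewrite coef_poly ltn_ord inord_val !mxE /= coef0.
Qed.

Lemma cyclic_vec (F : fieldType) m (A : 'M[F]_m.+1) :
  coprimep (char_poly A) (char_poly A)^`() ->
  exists v, forall w : 'cV_m.+1, exists q, w = horner_mx A q *m v.
Proof.
move=> cP; have [v [p [ap sp]]] := cyclic_ann cP.
have Ku := krylov_unit ap sp.
exists v => w; exists (\poly_(j < m.+1) (invmx (krylov A v) *m w) (inord j) 0).
by rewrite -krylov_mul mulKVmx.
Qed.

Lemma map_horner_mx (F : fieldType) (s : {rmorphism F -> F}) m (A : 'M[F]_m.+1) q :
  map_mx s (horner_mx A q) = horner_mx (map_mx s A) (map_poly s q).
Proof.
elim/poly_ind: q => [|p c IH]; first by rewrite !rmorph0 ?map_mx0 ?linear0.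
rewrite rmorphD rmorphM /= horner_mx_X horner_mx_C.
rewrite !rmorphD !rmorphM /= map_polyX map_polyC /=.
by rewrite horner_mx_X horner_mx_C IH map_scalar_mx.
Qed.

Lemma tr_horner_mx (F : fieldType) m (A : 'M[F]_m.+1) q :
  (horner_mx A q)^T = horner_mx A^T q.
Proof.
elim/poly_ind: q => [|p c IH]; first by rewrite !rmorph0 trmx0.
rewrite !rmorphD !rmorphM /= !horner_mx_X !horner_mx_C.
rewrite linearD /= tr_scalar_mx -mulmxE trmx_mul IH; congr (_ + _).
by rewrite mulmxE -{1}(horner_mx_X A^T) -rmorphM mulrC rmorphM /= horner_mx_X.
Qed.

Theorem mainTheorem12 (E : fieldType) (sigma : {rmorphism E -> E})
  (n : nat) (beta A' a : 'M[E]_n) :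
  is_nontrivial_involution sigma ->
  [pchar E] =i pred0 ->
  beta \in unitmx ->
  mxstar sigma beta = - beta ->
  in_h sigma beta A' ->
  regular_semisimple A' ->
  a \in unitmx ->
  A' = mxconj sigma a *m a ->
  exists2 zeta : 'M[E]_n, zeta \in unitmx &
    A' = invmx beta *m mxstar sigma zeta *m beta *m zeta.
Proof.
case: n beta A' a => [|m] beta A' a [ss _] _ bu _ hA rsA au HA.
  by exists 1%:M; [exact: unitmx1 | apply/matrixP => [[]]].
set ab := mxconj sigma a.
have mss : forall k l (X : 'M[E]_(k,l)), map_mx sigma (map_mx sigma X) = X.
  by move=> k l X; apply/matrixP=> i j; rewrite !mxE ss.
have abu : ab \in unitmx by rewrite /ab /mxconj map_unitmx.
have Abar : map_mx sigma A' = a *m ab by rewrite HA map_mxM /ab /mxconj mss.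
have conjA : ab *m map_mx sigma A' *m invmx ab = A'.
  by rewrite Abar !mulmxA -HA mulmxK.
have hconj : forall q, horner_mx A' q *m ab = ab *m horner_mx (map_mx sigma A') q.
  by move=> q; rewrite -{1}conjA horner_mx_uconj // mulmxKV.
have [v0 cyc] := cyclic_vec rsA.
have [q0 Hq0] := cyc (ab *m map_mx sigma v0).
set c := horner_mx A' q0; set ps := map_poly sigma q0; set cs := horner_mx A' ps.
have Sc : ab *m map_mx sigma (c *m v0) = cs *m (c *m v0).
  by rewrite map_mxM /c map_horner_mx -/ps mulmxA -hconj -mulmxA Hq0.
have SS : ab *m map_mx sigma (ab *m map_mx sigma v0) = A' *m v0.
  by rewrite map_mxM mss {2}/ab /mxconj mss mulmxA -HA.
have eq1 : A' *m v0 = (cs *m c) *m v0.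
  by rewrite -SS Hq0 Sc mulmxA.
have K0 : horner_mx A' ('X - ps * q0) *m v0 = 0.
  by rewrite rmorphB rmorphM /= horner_mx_X mulmxBl -mulmxE -/cs -/c -eq1 subrr.
have Aeq : A' = cs *m c.
  apply/eqP; rewrite -subr_eq0; apply/eqP; apply: mx0_of_kill => w.
  have [q ->] := cyc w.
  have -> : A' - cs *m c = horner_mx A' ('X - ps * q0).
    by rewrite rmorphB rmorphM /= horner_mx_X mulmxE.
  by rewrite mulmxA mulmxE -rmorphM mulrC rmorphM -mulmxE -mulmxA K0 mulmx0.
exists c.
  have : A' \in unitmx by rewrite HA unitmx_mul abu au.
  by rewrite Aeq unitmx_mul => /andP[].
rewrite {1}Aeq /mxstar /c map_horner_mx tr_horner_mx -/ps.
rewrite (_ : (map_mx sigma A')^T = beta *m A' *m invmx beta); last exact: hA.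
rewrite horner_mx_uconj // -/cs !mulmxA mulVmx // mul1mx mulmxKV //.
Qed.
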